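(* Let $q>0$ be a constant and consider $$u_t=d_1\Delta u+u\left[\frac{(1-u)(u-p)}{1+qv}-av\right],\qquad v_t=d_2\Delta v+bv(1-v-cu)\quad\text{in }\Omega\times(0,\infty),$$ with $\partial_\nu u=\partial_\nu v=0$ on $\partial\Omega$. Let $(u^*,v^* )$ be a positive equilibrium of the kinetic system $\dot u=u[\frac{(1-u)(u-p)}{1+qv}-av]$, $\dot v=bv(1-v-cu)$ that is linearly asymptotically stable for the kinetic system (trace of the Jacobian negative, determinant positive). Then for all parameter values and all diffusion coefficients $d_1,d_2>0$, the spatially homogeneous steady state $(u^*,v^* )$ does not undergo diffusion-driven (Turing) instability: for every eigenvalue $\mu\ge0$ of $-\Delta$ with Neumann boundary conditions, all eigenvalues of $J(u^*,v^* )-\mu\,\mathrm{diag}(d_1,d_2)$ have negative real part, where $J(u^*,v^* )$ is the kinetic Jacobian.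
   Context: $\Omega\subset\mathbb{R}^n$ is a bounded domain with smooth boundary and outward normal $\nu$; $a,b,c>0$, $0\le p<1$. *)

(* Defs.v *)
From HB Require Import structures.
From mathcomp Require Import all_boot all_order all_algebra.
From mathcomp Require Import complex.
Set Implicit Arguments. Unset Strict Implicit. Unset Printing Implicit Defensive.
Import Order.TTheory GRing.Theory Num.Theory.
Local Open Scope ring_scope.

Section Model.
Variable R : rcfType.
Variables (a b c p q : R).

Definition kin_f (u v : R) : R := u * ((1 - u) * (u - p) / (1 + q * v) - a * v).
Definition kin_g (u v : R) : R := b * v * (1 - v - c * u).

(* Jacobian of (kin_f, kin_g): partial derivatives computed explicitly *)
Definition fu (u v : R) : R :=
  ((1 - u) * (u - p) / (1 + q * v) - a * v) + u * ((1 + p - 2 * u) / (1 + q * v)).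
Definition fv (u v : R) : R :=
  u * (- (q * ((1 - u) * (u - p))) / (1 + q * v) ^+ 2 - a).
Definition gu (u v : R) : R := - (b * c * v).
Definition gv (u v : R) : R := b * (1 - v - c * u) - b * v.

Definition kin_jac (u v : R) : 'M[R]_2 :=
  \matrix_(i < 2, j < 2)
    if i == 0 then (if j == 0 then fu u v else fv u v)
    else (if j == 0 then gu u v else gv u v).
End Model.

Definition diag2 (R : rcfType) (d1 d2 : R) : 'M[R]_2 :=
  \matrix_(i < 2, j < 2) (if i == j then (if i == 0 then d1 else d2) else 0).

Definition toCmx (R : rcfType) (M : 'M[R]_2) : 'M[R[i]]_2 :=
  map_mx (fun x => Complex x 0) M.

(* Main.v *)
Require Import Defs.
From HB Require Import structures.
From mathcomp Require Import all_boot all_order all_algebra.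
From mathcomp Require Import complex.
From mathcomp Require Import ring lra.
Import Order.TTheory GRing.Theory Num.Theory.
Local Open Scope ring_scope.

Lemma det2 (R : comNzRingType) (A : 'M[R]_2) :
  \det A = A 0 0 * A 1 1 - A 0 1 * A 1 0.
Proof.
rewrite (expand_det_row _ 0) big_ord_recr big_ord1 /cofactor !det_mx11 /=.
rewrite !mxE /=.
have e0 : widen_ord (leqnSn 1) ord0 = 0 :> 'I_2 by apply/val_inj.
have e1 : lift (0:'I_2) (0:'I_1) = 1 by apply/val_inj.
have e2 : lift (ord_max:'I_2) (0:'I_1) = 0 by apply/val_inj.
have e3 : (ord_max:'I_2) = 1 by apply/val_inj.
rewrite e0 e1 e2 e3 expr0 expr1 mul1r mulN1r mulrN.
by [].
Qed.

Lemma tr2 (R : comNzRingType) (A : 'M[R]_2) : \tr A = A 0 0 + A 1 1.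
Proof.
rewrite /mxtrace big_ord_recr big_ord1 /=.
have e0 : widen_ord (leqnSn 1) ord0 = 0 :> 'I_2 by apply/val_inj.
have e3 : (ord_max:'I_2) = 1 by apply/val_inj.
by rewrite e0 e3.
Qed.

Lemma charp2 (F : fieldType) (A : 'M[F]_2) z : eigenvalue A z ->
  (z - A 0 0) * (z - A 1 1) - A 0 1 * A 1 0 = 0.
Proof.
rewrite eigenvalue_root_char /root /char_poly det2 /char_poly_mx !mxE /=.
by rewrite !hornerE /= mulrNN => /eqP.
Qed.

Lemma t {R : rcfType} {x y a b c d : R} :
  (Complex x y - Complex a 0) * (Complex x y - Complex d 0) - Complex b 0 * Complex c 0 = 0 ->
  a + d < 0 -> 0 < a * d - b * c -> x < 0.
Proof.
move=> /eqP; rewrite eq_complex /= => /andP[/eqP h1 /eqP h2] ht hd.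
rewrite ltNge; apply/negP => hx.
have hy : y = 0.
  have : y * (2 * x - a - d) = 0 by rewrite -h2; ring.
  move/eqP; rewrite mulf_eq0 => /orP[/eqP //|/eqP h]; exfalso; lra.
subst y. nra.
Qed.

Lemma stable2 (R : rcfType) (M : 'M[R]_2) z :
  M 0 0 + M 1 1 < 0 -> 0 < M 0 0 * M 1 1 - M 0 1 * M 1 0 ->
  eigenvalue (toCmx M) z -> complex.Re z < 0.
Proof.
move=> ht hd /charp2; rewrite /toCmx !mxE; case: z => x y /= h; exact: (t h ht hd).

Qed.

Theorem mainTheorem17 (R : rcfType) (a b c p q : R)
  (ha : 0 < a) (hb : 0 < b) (hc : 0 < c) (hp0 : 0 <= p) (hp1 : p < 1) (hq : 0 < q)
  (us vs : R) (hus : 0 < us) (hvs : 0 < vs)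
  (heqf : kin_f a p q us vs = 0) (heqg : kin_g b c us vs = 0)
  (htr : \tr (kin_jac a b c p q us vs) < 0)
  (hdet : 0 < \det (kin_jac a b c p q us vs))
  (d1 d2 : R) (hd1 : 0 < d1) (hd2 : 0 < d2) :
  forall mu : R, 0 <= mu ->
  forall z : R[i],
    eigenvalue (toCmx (kin_jac a b c p q us vs - mu *: diag2 d1 d2)) z ->
    complex.Re z < 0.
Proof.
move=> mu hmu z; move: htr hdet.
have hg : 1 - vs - c * us = 0.
  move: heqg; rewrite /kin_g => /eqP; rewrite mulf_eq0 mulf_eq0 => /orP[/orP[]|/eqP //];
  move/eqP=> h; exfalso; lra.
have egv : gv b c us vs = - (b * vs) by rewrite /gv hg; ring.
have hgu : gu b c us vs < 0 by rewrite /gu oppr_lt0; apply: mulr_gt0 => //; apply: mulr_gt0.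
have hqv : 0 < 1 + q * vs by have := mulr_gt0 hq hvs; lra.
set X := (1 - us) * (us - p).
have hX : X / (1 + q * vs) = a * vs.
  move: heqf; rewrite /kin_f -/X => /eqP; rewrite mulf_eq0 => /orP[/eqP h|/eqP h]; first by exfalso; lra.
  lra.
have hXp : 0 < X.
  have -> : X = (X / (1 + q * vs)) * (1 + q * vs) by rewrite divfK // gt_eqF.
  by rewrite hX; apply: mulr_gt0 => //; apply: mulr_gt0.
have hfv : fv a p q us vs < 0.
  rewrite /fv -/X; rewrite pmulr_rlt0 //.
  have : 0 < q * X / (1 + q * vs) ^+ 2 by apply: divr_gt0; [apply: mulr_gt0|apply: exprn_gt0].
  rewrite mulNr; lra.
have hbv : 0 < b * vs by apply: mulr_gt0.
rewrite tr2 det2 /kin_jac !mxE /= => htr hdet; rewrite egv in htr hdet.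
have hfu : fu a p q us vs < 0.
  rewrite ltNge; apply/negP => h.
  have : 0 <= fu a p q us vs * (b * vs) by apply: mulr_ge0 => //; lra.
  have : 0 < fv a p q us vs * gu b c us vs by rewrite -mulrNN; apply: mulr_gt0; rewrite oppr_gt0.
  lra.
apply: stable2; rewrite /kin_jac /diag2 !mxE /= egv.
- have := mulr_ge0 hmu (ltW hd1); have := mulr_ge0 hmu (ltW hd2); lra.
- rewrite !mulr0 !subr0.
  have h1 := mulr_ge0 hmu (ltW hd1); have h2 := mulr_ge0 hmu (ltW hd2).
  have h3 : 0 <= mu * d2 * - fu a p q us vs by apply: (mulr_ge0 h2); lra.
  have h4 : 0 <= mu * d1 * (b * vs) by apply: (mulr_ge0 h1); lra.
  have h5 := mulr_ge0 h1 h2.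
  have e : (fu a p q us vs - mu * d1) * (- (b * vs) - mu * d2) -
    fv a p q us vs * gu b c us vs =
    (fu a p q us vs * - (b * vs) - fv a p q us vs * gu b c us vs)
    + mu * d2 * - fu a p q us vs + mu * d1 * (b * vs) + mu * d1 * (mu * d2) by ring.
  rewrite e; lra.
Qed.
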